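(* Let $A_0,A_1,A_2\in\mathbb{R}[x]$ with $A_2\not\equiv0$, let $I$ be an open interval on which $A_2$ has no zeros, and let $g_0,g_1\in\mathbb{R}[x,y]$ with $g_1\not\equiv0$ and $\partial_y(g_0/g_1)\not\equiv0$. Consider the polynomial vector field $\mathcal{X}=P\,\partial_x+Q\,\partial_y$ with $$P=A_2(x)\left(g_0\,\partial_y g_1-g_1\,\partial_y g_0\right),\qquad Q=A_0(x)g_1^2+A_1(x)g_1g_0+A_2(x)g_0^2+A_2(x)\left(g_1\,\partial_x g_0-g_0\,\partial_x g_1\right).$$ Let $w\in C^2(I)$ be any nonzero solution of $A_2w''+A_1w'+A_0w=0$ on $I$, and put $f(x,y)=g_1(x,y)\,w'(x)-g_0(x,y)\,w(x)$ on $I\times\mathbb{R}$. Then $f$ is an invariant of $\mathcal{X}$ with the polynomial cofactor $$k=\left(A_0\,\partial_y g_1+A_1\,\partial_y g_0\right)g_1+A_2\,g_0\,\partial_y g_0+A_2\left(\partial_y g_1\,\partial_x g_0-\partial_y g_0\,\partial_x g_1\right),$$ i.e. $P\,\partial_x f+Q\,\partial_y f=k\,f$ on $I\times\mathbb{R}$.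
   Context: A $C^1$ function $f$ on an open set $U\subset\mathbb{R}^2$ is called an invariant of a vector field $\mathcal{X}=P\partial_x+Q\partial_y$ with cofactor $k$ if $P\,\partial_x f+Q\,\partial_y f=k f$ on $U$. *)

(* Defs.v *)
From HB Require Import structures.
From mathcomp Require Import all_boot all_order all_algebra.
From mathcomp Require Import all_classical all_reals all_analysis.
Set Implicit Arguments. Unset Strict Implicit. Unset Printing Implicit Defensive.
Import Order.TTheory GRing.Theory Num.Theory.
Import numFieldNormedType.Exports.
Local Open Scope classical_set_scope.
Local Open Scope ring_scope.

(* Bivariate polynomials R[x,y] are represented as {poly {poly R}}:
   the coefficients are polynomials in x, the outer variable is y. *)
Definition peval2 {R : realType} (p : {poly {poly R}}) (x y : R) : R :=
  (p.[y%:P]).[x].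

Definition dxp {R : realType} (p : {poly {poly R}}) : {poly {poly R}} :=
  map_poly (@deriv R) p.
Definition dyp {R : realType} (p : {poly {poly R}}) : {poly {poly R}} :=
  deriv p.

Definition pdx {R : realType} (f : R -> R -> R) (x y : R) : R :=
  derive1 (fun t => f t y) x.
Definition pdy {R : realType} (f : R -> R -> R) (x y : R) : R :=
  derive1 (f x) y.

Definition C1_on {R : realType} (U : set (R * R)) (f : R -> R -> R) : Prop :=
  forall p : R * R, U p ->
    [/\ derivable (fun t => f t p.2) p.1 1,
        derivable (f p.1) p.2 1,
        {for p, continuous (fun q : R * R => pdx f q.1 q.2)} &
        {for p, continuous (fun q : R * R => pdy f q.1 q.2)}].

Definition is_invariant {R : realType} (U : set (R * R))
  (P Q k : R -> R -> R) (f : R -> R -> R) : Prop :=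
  open U /\ C1_on U f /\
  forall p : R * R, U p ->
    P p.1 p.2 * pdx f p.1 p.2 + Q p.1 p.2 * pdy f p.1 p.2 = k p.1 p.2 * f p.1 p.2.

Definition open_itv {R : realType} (a b : \bar R) : set R :=
  [set x : R | (a < x%:E)%E /\ (x%:E < b)%E].

Section Field.
Context {R : realType} (A0 A1 A2 : {poly R}) (g0 g1 : {poly {poly R}}).
Definition liftx (A : {poly R}) : {poly {poly R}} := A%:P.
Definition vfield_P : {poly {poly R}} :=
  liftx A2 * (g0 * dyp g1 - g1 * dyp g0).
Definition vfield_Q : {poly {poly R}} :=
  liftx A0 * g1 ^+ 2 + liftx A1 * g1 * g0 + liftx A2 * g0 ^+ 2
  + liftx A2 * (g1 * dxp g0 - g0 * dxp g1).
Definition vfield_cofactor : {poly {poly R}} :=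
  (liftx A0 * dyp g1 + liftx A1 * dyp g0) * g1 + liftx A2 * g0 * dyp g0
  + liftx A2 * (dyp g1 * dxp g0 - dyp g0 * dxp g1).
End Field.

(* Main.v *)
Require Import Defs.
From HB Require Import structures.
From mathcomp Require Import all_boot all_order all_algebra.
From mathcomp Require Import all_classical all_reals all_analysis.
From mathcomp Require Import ring lra.
Import Order.TTheory GRing.Theory Num.Theory.
Import numFieldNormedType.Exports.
Local Open Scope classical_set_scope.
Local Open Scope ring_scope.

Section H.
Variable R : realType.
Implicit Types p : {poly {poly R}}.

Lemma peval2_map p x y : peval2 p x y = (map_poly (horner_eval x) p).[y].
Proof.
rewrite /peval2 -[y in RHS](hornerC y x) -/(horner_eval x y%:P).
by rewrite horner_map.
Qed.

Lemma dxp_horner p y : (p.[y%:P])^`() = (dxp p).[y%:P].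
Proof.
have hs : (size (dxp p) <= size p)%N by rewrite /dxp /map_poly; exact: size_poly.
rewrite (horner_coef_wide _ hs) horner_coef raddf_sum /=.
apply: eq_bigr => i _.
rewrite /dxp coef_map_id0 ?deriv0 // -rmorphXn mulrC mul_polyC derivZ.
by rewrite mulrC mul_polyC.
Qed.

Lemma is_derive_x p x y :
  is_derive x (1:R) (fun t => peval2 p t y) (peval2 (dxp p) x y).
Proof.
rewrite /peval2 -dxp_horner.
exact: is_derive_poly.
Qed.

Lemma is_derive_y p x y :
  is_derive y (1:R) (peval2 p x) (peval2 (dyp p) x y).
Proof.
have -> : peval2 p x = horner (map_poly (horner_eval x) p).
  by apply/funext => z; rewrite peval2_map.
by rewrite peval2_map /dyp -deriv_map; exact: is_derive_poly.
Qed.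

Lemma peval2_cont p : continuous (fun z : R * R => peval2 p z.1 z.2).
Proof.
elim/poly_ind: p => [|p c ih].
  have -> : (fun z : R * R => peval2 0 z.1 z.2) = cst 0.
    by apply/funext => z; rewrite /peval2 !horner0.
  exact: cst_continuous.
have -> : (fun z : R * R => peval2 (p * 'X + c%:P) z.1 z.2) =
   (fun z => peval2 p z.1 z.2 * z.2 + c.[z.1]).
  by apply/funext => z; rewrite /peval2 !hornerE.
move=> z; apply: cvgD; first apply: cvgM.
- exact: ih.
- exact: cvg_snd.
- apply: (@continuous_comp _ _ _ fst (horner c)); first exact: cvg_fst.
  exact: continuous_horner.
Qed.

Lemma cont_near (T : topologicalType) (h E : T -> R) (p : T) :
  (\forall q \near p, E q = h q) -> {for p, continuous E} -> {for p, continuous h}.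
Proof.
move=> hE cE; have hp : E p = h p by exact: nbhs_singleton hE.
apply: cvg_trans (near_eq_cvg hE) _; rewrite -hp; exact: cE.
Qed.

End H.
Arguments is_derive_x {R}.
Arguments is_derive_y {R}.
Arguments peval2_cont {R}.

Lemma w_cont (R : realType) (w : R -> R) x : derivable w x 1 -> {for x, continuous w}.
Proof. by move=> h; apply/differentiable_continuous/derivable1_diffP. Qed.

Lemma comp_fst (R : realType) (h : R -> R) (p : R * R) :
  {for p.1, continuous h} -> {for p, continuous (fun q : R * R => h q.1)}.
Proof.
move=> hc; apply: (@continuous_comp _ _ _ fst h); first exact: cvg_fst.
exact: hc.
Qed.

Theorem mainTheorem2 (R : realType) (A0 A1 A2 : {poly R})
  (g0 g1 : {poly {poly R}}) (a b : \bar R) (w : R -> R) :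
  A2 != 0 ->
  (a < b)%E ->
  (forall x, open_itv a b x -> A2.[x] != 0) ->
  g1 != 0 ->
  (* d/dy (g0/g1) is not identically zero, i.e. its numerator
     g1 * dy g0 - g0 * dy g1 is a nonzero polynomial *)
  g1 * dyp g0 - g0 * dyp g1 != 0 ->
  (* w is C^2 on I *)
  (forall x, open_itv a b x ->
     [/\ derivable w x 1, derivable (derive1 w) x 1 & {for x, continuous (derive1 (derive1 w))}]) ->
  (* w is a nonzero solution of A2 w'' + A1 w' + A0 w = 0 on I *)
  (exists x, open_itv a b x /\ w x != 0) ->
  (forall x, open_itv a b x ->
     A2.[x] * (derive1 (derive1 w)) x + A1.[x] * (derive1 w) x + A0.[x] * w x = 0) ->
  is_invariant [set p : R * R | open_itv a b p.1]
    (peval2 (vfield_P A2 g0 g1)) (peval2 (vfield_Q A0 A1 A2 g0 g1))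
    (peval2 (vfield_cofactor A0 A1 A2 g0 g1))
    (fun x y => peval2 g1 x y * (derive1 w) x - peval2 g0 x y * w x).
Proof.
move=> _ _ _ _ _ hw _ hode.
pose f := fun x y => peval2 g1 x y * derive1 w x - peval2 g0 x y * w x.
change (is_invariant [set p : R * R | open_itv a b p.1]
    (peval2 (vfield_P A2 g0 g1)) (peval2 (vfield_Q A0 A1 A2 g0 g1))
    (peval2 (vfield_cofactor A0 A1 A2 g0 g1)) f).
have openI : open (open_itv a b).
  by apply: openI; [exact: open_ereal_gt | exact: open_ereal_lt].
have openU : open [set p : R * R | open_itv a b p.1].
  apply: (@open_comp _ _ fst (open_itv a b)) => // q _; exact: cvg_fst.
have dx x y : open_itv a b x -> is_derive x (1:R) (fun t => f t y)
   (peval2 g1 x y * derive1 (derive1 w) x + derive1 w x * peval2 (dxp g1) x y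
   - (peval2 g0 x y * derive1 w x + w x * peval2 (dxp g0) x y)).
  move=> Ix; have [w1 w2 _] := hw x Ix.
  have := is_deriveB (is_deriveM (is_derive_x g1 x y) (derivableP w2))
                     (is_deriveM (is_derive_x g0 x y) (derivableP w1)).
  by rewrite -!derive1E.
have dy x y : is_derive y (1:R) (f x)
   (peval2 (dyp g1) x y * derive1 w x - peval2 (dyp g0) x y * w x).
  have := is_deriveB (is_deriveM (is_derive_y g1 x y) (is_derive_cst (derive1 w x) y 1))
                     (is_deriveM (is_derive_y g0 x y) (is_derive_cst (w x) y 1)).
  move=> h; apply: (trigger_derive h); rewrite /= !scaler0 !add0r.
  rewrite -[_ *: peval2 (dyp g1) x y]/(_ * _) -[_ *: peval2 (dyp g0) x y]/(_ * _); ring.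
split=> //; split.
  move=> p Up; have [w1 w2 w3] := hw p.1 Up.
  have nU : \forall q \near p, open_itv a b q.1.
    exact: (open_nbhs_nbhs (conj openU Up)).
  split.
  - exact: (@ex_derive _ _ _ _ _ _ _ (dx p.1 p.2 Up)).
  - exact: (@ex_derive _ _ _ _ _ _ _ (dy p.1 p.2)).
  - apply: (@cont_near _ _ _ (fun q : R * R =>
       peval2 g1 q.1 q.2 * derive1 (derive1 w) q.1 + derive1 w q.1 * peval2 (dxp g1) q.1 q.2
       - (peval2 g0 q.1 q.2 * derive1 w q.1 + w q.1 * peval2 (dxp g0) q.1 q.2))).
      apply: filterS nU => q Iq; rewrite /pdx [RHS]derive1E.
      by rewrite (@derive_val _ _ _ _ _ _ _ (dx q.1 q.2 Iq)).
    have c1 := comp_fst _ _ _ (w_cont _ _ _ w2). have c0 := comp_fst _ _ _ (w_cont _ _ _ w1).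
    have c2 := comp_fst _ _ _ w3.
    have e1 := peval2_cont g1 p. have e2 := peval2_cont (dxp g1) p.
    have e3 := peval2_cont g0 p. have e4 := peval2_cont (dxp g0) p.
    apply: cvgB; apply: cvgD; apply: cvgM.
      exact: e1. exact: c2. exact: c1. exact: e2. exact: e3. exact: c1. exact: c0. exact: e4.
  - apply: (@cont_near _ _ _ (fun q : R * R =>
       peval2 (dyp g1) q.1 q.2 * derive1 w q.1 - peval2 (dyp g0) q.1 q.2 * w q.1)).
      apply: filterS nU => q _; rewrite /pdy [RHS]derive1E.
      by rewrite (@derive_val _ _ _ _ _ _ _ (dy q.1 q.2)).
    have c1 := comp_fst _ _ _ (w_cont _ _ _ w2). have c0 := comp_fst _ _ _ (w_cont _ _ _ w1).
    have e1 := peval2_cont (dyp g1) p. have e2 := peval2_cont (dyp g0) p.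
    apply: cvgB; apply: cvgM.
      exact: e1. exact: c1. exact: e2. exact: c0.
move=> [x y] /= Ix.
rewrite /pdx /pdy !derive1E (@derive_val _ _ _ _ _ _ _ (dx x y Ix)).
rewrite (@derive_val _ _ _ _ _ _ _ (dy x y)).
have := hode x Ix.
rewrite /f /vfield_P /vfield_Q /vfield_cofactor /liftx /peval2 /dxp /dyp.
rewrite !expr2 !hornerE => h; apply/eqP; rewrite -subr_eq0; apply/eqP.
transitivity ((g0.[y%:P].[x] * g1^`().[y%:P].[x] - g1.[y%:P].[x] * g0^`().[y%:P].[x])
  * g1.[y%:P].[x] * (A2.[x] * derive1 (derive1 w) x + A1.[x] * derive1 w x + A0.[x] * w x));
  last by rewrite h mulr0.
have M : forall c d : R, GRing.GRing_mul__canonical__SemiGroup_Law R c d = c * d by [].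
rewrite !M.
ring.
Qed.
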